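(* Let $\Gamma$ be a finitely generated residually finite infinite group, $\{\Gamma_n\}_{n\in\mathbb N}$ finite-index normal subgroups with $\bigcap_n\bigcup_{i\ge n}\Gamma_i=\{e\}$, $f\in\mathbb{Z}\Gamma$ well-balanced and $g\in\mathbb{Z}\Gamma$. Then $\pi_n(g)\in\mathbb{Z}(\Gamma/\Gamma_n)\pi_n(f)$ for all $n\in\mathbb{N}$ if and only if $g\in\mathbb{Z}\Gamma f$.
   Context: $f\in\mathbb{Z}\Gamma$ is well-balanced if $\sum_sf_s=0$, $f_s\le0$ for $s\ne e$, $f_s=f_{s^{-1}}$, and the support of $f$ generates $\Gamma$. $\pi_n:\mathbb{Z}\Gamma\to\mathbb{Z}(\Gamma/\Gamma_n)$ is the ring homomorphism induced by the quotient map; multiplication in group rings is convolution $(gh)_w=\sum_sg_sh_{s^{-1}w}$. *)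

(* Defs.v *)
From HB Require Import structures.
From mathcomp Require Import all_boot all_order all_algebra all_fingroup.
Set Implicit Arguments. Unset Strict Implicit. Unset Printing Implicit Defensive.
Import GRing.Theory Num.Theory.

(* An element of Z[G] is represented by a formal finite sum
   sum_k c_k * g_k, given as a list of pairs (g_k, c_k).  Two such lists
   represent the same element iff they have the same coefficients. *)
Definition grpring (G : groupType) := seq (G * int)%type.

Definition coef (G : groupType) (f : grpring G) (w : G) : int :=
  (\sum_(p <- f | p.1 == w) p.2)%R.

Definition grmul (G : groupType) (g h : grpring G) : grpring G :=
  [seq ((p.1 * q.1)%g, (p.2 * q.2)%R) | p <- g, q <- h].

Definition in_left_ideal (G : groupType) (g f : grpring G) : Prop :=
  exists h : grpring G, forall w, coef g w = coef (grmul h f) w.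

Definition prodl (G : groupType) (l : seq G) : G := foldr (fun x y => (x * y)%g) 1%g l.

Definition generates (G : groupType) (P : pred G) : Prop :=
  forall x : G, exists l : seq G, all (fun y => P y || P (y^-1)%g) l /\ x = prodl l.

Definition finitely_generated (G : groupType) : Prop :=
  exists S : seq G, generates (fun y => y \in S).

Definition infinite_group (G : groupType) : Prop :=
  ~ exists s : seq G, forall x : G, x \in s.

Definition group_hom (G H : groupType) (phi : G -> H) : Prop :=
  forall x y : G, phi (x * y)%g = (phi x * phi y)%g.

Definition residually_finite (G : groupType) : Prop :=
  forall x : G, x != 1%g ->
    exists (Q : finGroupType) (phi : G -> Q), group_hom phi /\ phi x != 1%g.

Definition support (G : groupType) (f : grpring G) : seq G :=
  [seq s <- undup (map fst f) | coef f s != 0%R].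

Definition well_balanced (G : groupType) (f : grpring G) : Prop :=
  [/\ (\sum_(s <- undup (map fst f)) coef f s)%R = 0%R,
      (forall s : G, s != 1%g -> (coef f s <= 0)%R),
      (forall s : G, coef f s = coef f (s^-1)%g) &
      generates (fun s => coef f s != 0%R)].

(* The finite quotient Gamma/Gamma_n is given as a finite group Q together with a
   surjective homomorphism phi : Gamma -> Q whose kernel is Gamma_n. *)
Definition kernel (G : groupType) (Q : finGroupType) (phi : G -> Q) : pred G :=
  fun x => phi x == 1%g.

(* group ring Z[Q] of a finite group: functions Q -> int, with convolution *)
Definition fgrmul (Q : finGroupType) (u v : {ffun Q -> int}) : {ffun Q -> int} :=
  [ffun w => (\sum_(s : Q) u s * v ((s^-1) * w)%g)%R].

Definition pi_hom (G : groupType) (Q : finGroupType) (phi : G -> Q) (f : grpring G)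
  : {ffun Q -> int} :=
  [ffun q => (\sum_(p <- f | phi p.1 == q) p.2)%R].

(* Main.v *)
Require Import Defs.
From HB Require Import structures.
From mathcomp Require Import all_boot all_order all_algebra all_fingroup.
From mathcomp Require Import zify.
From Stdlib Require Import Classical.

Module AuxA.
Set Implicit Arguments. Unset Strict Implicit. Unset Printing Implicit Defensive.
Import GRing.Theory Num.Theory.
Local Open Scope ring_scope.

Lemma sum_pick (I : eqType) (r : seq I) (a : I) (F : I -> int) :
  uniq r -> a \in r -> \sum_(i <- r | i == a) F i = F a.
Proof. by move=> ur ar; rewrite -big_filter (filter_pred1_uniq ur ar) big_seq1. Qed.

Section Helpers.
Variable G : groupType.

Lemma coef_mem (f : grpring G) y : coef f y != 0 -> y \in map fst f.
Proof.
apply: contraR => yn; rewrite /coef big1_seq // => p /andP[/eqP py pf].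
by case/negP: yn; rewrite -py map_f.
Qed.

Lemma mem_support (f : grpring G) y : (y \in Defs.support f) = (coef f y != 0).
Proof.
rewrite /Defs.support mem_filter mem_undup; case: (coef f y =P 0) => //= /eqP.
by move/coef_mem.
Qed.

Lemma uniq_support (f : grpring G) : uniq (Defs.support f).
Proof. by rewrite /Defs.support filter_uniq ?undup_uniq. Qed.

Lemma regroup (f : grpring G) (Y : seq G) (H : G -> int) :
  uniq Y -> {subset map fst f <= Y} ->
  \sum_(e <- f) e.2 * H e.1 = \sum_(y <- Y) coef f y * H y.
Proof.
move=> uY sY; rewrite /coef.
under [RHS]eq_bigr => y _ do rewrite big_distrl /= big_mkcond /=.
rewrite exchange_big /=; apply: eq_big_seq => e ef.
rewrite -big_mkcond /=.
under eq_bigl => y do rewrite eq_sym.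
by rewrite sum_pick // sY // map_f.
Qed.

Lemma regroupT (f : grpring G) (H : G -> int) :
  \sum_(e <- f) e.2 * H e.1 = \sum_(y <- Defs.support f) coef f y * H y.
Proof.
rewrite (@regroup f (undup (map fst f))) ?undup_uniq //; last by move=> y; rewrite mem_undup.
rewrite /Defs.support big_filter [RHS]big_mkcond /=; apply: eq_bigr => y _.
by case: (coef f y =P 0) => [->|]; rewrite ?mul0r.
Qed.

Lemma pi_coef (Q : finGroupType) (phi : G -> Q) (f : grpring G) q :
  pi_hom phi f q = \sum_(y <- Defs.support f | phi y == q) coef f y.
Proof.
rewrite /pi_hom ffunE big_mkcond /=.
transitivity (\sum_(e <- f) e.2 * (phi e.1 == q)%:R).
  by apply: eq_bigr => e _; case: eqP; rewrite ?mulr1 ?mulr0.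
rewrite (regroupT f (fun y => (phi y == q)%:R)) [RHS]big_mkcond; apply: eq_bigr => y _.
by case: eqP; rewrite ?mulr1 ?mulr0.
Qed.

End Helpers.

End AuxA.
Import AuxA.

Module AuxB.
Set Implicit Arguments. Unset Strict Implicit. Unset Printing Implicit Defensive.
Import GRing.Theory Num.Theory.

Section Ball.
Variable G : groupType.
Variable T : seq G.
Hypothesis Tsym : forall t, t \in T -> (t^-1)%g \in T.

Fixpoint ballG k : seq G :=
  if k is k'.+1 then ballG k' ++ [seq (x * t)%g | x <- ballG k', t <- T] else [:: 1%g].

Lemma ballG0 x : (x \in ballG 0) = (x == 1%g).
Proof. by rewrite inE. Qed.

Lemma ballG_S k x : x \in ballG k -> x \in ballG k.+1.
Proof. by rewrite /= mem_cat => ->. Qed.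

Lemma ballG_le k k' x : (k <= k')%N -> x \in ballG k -> x \in ballG k'.
Proof.
move=> /subnKC <-; elim: (k' - k)%N => [|d IH]; first by rewrite addn0.
by move=> xk; rewrite addnS; apply/ballG_S/IH.
Qed.

Lemma ballG_step k x t : x \in ballG k -> t \in T -> (x * t)%g \in ballG k.+1.
Proof. by move=> xk tT; rewrite /= mem_cat; apply/orP; right; apply/allpairsP; exists (x, t). Qed.

Lemma ballG_elim k x : x \in ballG k.+1 ->
  x \in ballG k \/ exists x', exists2 t, x' \in ballG k /\ t \in T & x = (x' * t)%g.
Proof.
rewrite /= mem_cat => /orP[->|/allpairsP[[a b] [/= ak bT ->]]]; first by left.
by right; exists a, b.
Qed.

Lemma ballG_mul i j x y : x \in ballG i -> y \in ballG j -> (x * y)%g \in ballG (i + j).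
Proof.
move=> xi; elim: j y => [|j IH] y.
  by rewrite ballG0 => /eqP ->; rewrite mulg1 addn0.
case/ballG_elim => [yj|[y' [t [y'j tT] ->]]]; first by rewrite addnS; apply/ballG_S/IH.
by rewrite mulgA addnS; apply: ballG_step => //; apply: IH.
Qed.

Lemma ballG_T t : t \in T -> t \in ballG 1.
Proof. by move=> tT; rewrite -[t]mul1g; apply: ballG_step; rewrite ?ballG0. Qed.

Lemma ballG_inv k x : x \in ballG k -> (x^-1)%g \in ballG k.
Proof.
elim: k x => [|k IH] x; first by rewrite !ballG0 => /eqP ->; rewrite invg1.
case/ballG_elim => [xk|[x' [t [x'k tT] ->]]]; first by apply/ballG_S/IH.
rewrite invgM -add1n; apply: ballG_mul; last exact: IH.
exact/ballG_T/Tsym.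
Qed.

Lemma ballG_gen (P : pred G) : generates P -> (forall y, P y -> y \in T) ->
  (forall y, P (y^-1)%g -> y \in T) -> forall x, exists k, x \in ballG k.
Proof.
move=> gen PT PiT x; have [l [al ->]] := gen x.
elim: l al => [|a l IH] /=; first by exists 0%N; rewrite ballG0.
case/andP=> aP /IH [k lk]; exists (1 + k)%N; apply: ballG_mul => //.
by apply: ballG_T; case/orP: aP; [apply: PT|apply: PiT].
Qed.

End Ball.

End AuxB.
Import AuxB.

Module AuxC.
Set Implicit Arguments. Unset Strict Implicit. Unset Printing Implicit Defensive.
Import Order.TTheory GRing.Theory Num.Theory.
Local Open Scope ring_scope.

Lemma exmax (I : finType) (i0 : I) (h : I -> int) : exists xM, forall y, h y <= h xM.
Proof. case: (@arg_maxP _ _ I i0 xpredT h isT) => i _ Hi; exists i => y; exact: Hi. Qed.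

Lemma arith1 (a d r1 r2 : int) : 0 <= a * d - d -> 0 <= r1 -> 0 <= r2 -> d <= a * d + r1 + r2.
Proof. lia. Qed.

Lemma arith_w (X K M : int) : 0 <= M -> X <= K -> X <= K + M.
Proof. lia. Qed.
Lemma arith_t (A B C K M : int) : B - A <= K -> C - B <= M -> C - A <= K + M.
Proof. lia. Qed.

Lemma arith_t2 (A B C K M : int) : B - A <= M -> C - B <= K -> C - A <= K + M.
Proof. lia. Qed.

Lemma arith_s (Y X X1 : int) (m : nat) : Y <= X + (m.+1)%:Z -> X < X1 -> Y <= X1 + m%:Z.
Proof. lia. Qed.

Lemma arith_e (a b c : int) (K : nat) : - a = - c -> - b = - c -> a - b <= K%:Z.
Proof. lia. Qed.
Lemma arith_r (ux uy s1 s2 K : int) : s1 - s2 <= K -> ux <= s1 -> - uy <= - s2 -> ux - uy <= K.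
Proof. lia. Qed.
Lemma arith_b (a b : int) (K : nat) : a - b <= K%:Z -> a <= b + K%:Z.
Proof. lia. Qed.
Lemma arith_c (a b : int) (K : nat) : b - a <= K%:Z -> - a <= - b + K%:Z.
Proof. lia. Qed.

Section Core.
Variable Q : finGroupType.
Variable TQ : seq Q.
Variable F : {ffun Q -> int}.
Hypothesis F1 : forall t, t != 1%g -> F t <= 0.
Hypothesis F2 : forall t, F t = F (t^-1)%g.
Hypothesis F3 : \sum_t F t = 0.
Hypothesis TQ1 : forall t, t \in TQ -> t = 1%g \/ F t < 0.
Hypothesis TQ2 : forall t, t \in TQ -> (t^-1)%g \in TQ.
Hypothesis TQ3 : forall t, F t != 0 -> t \in TQ.

Fixpoint inQ k (x : Q) : bool :=
  if k is k'.+1 then inQ k' x || has (fun t => inQ k' (x * t^-1)%g) TQ else x == 1%g.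

Lemma inQ_S k x : inQ k x -> inQ k.+1 x.
Proof. by move=> h; apply/orP; left. Qed.

Lemma inQ_le k k' x : (k <= k')%N -> inQ k x -> inQ k' x.
Proof.
move=> /subnKC <-; elim: (k' - k)%N => [|d IH]; first by rewrite addn0.
by move=> xk; rewrite addnS; apply/inQ_S/IH.
Qed.

Lemma inQ_step k x t : inQ k x -> t \in TQ -> inQ k.+1 (x * t)%g.
Proof. by move=> xk tT /=; apply/orP; right; apply/hasP; exists t; rewrite ?mulgK. Qed.

Lemma inQ_elim k x : inQ k.+1 x ->
  inQ k x \/ exists2 t, t \in TQ & inQ k (x * t^-1)%g.
Proof. by case/orP=> [h|/hasP[t tT xt]]; [left|right; exists t]. Qed.

Lemma inQ_mul i j x y : inQ i x -> inQ j y -> inQ (i + j) (x * y)%g.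
Proof.
move=> xi; elim: j y => [|j IH] y.
  by move=> /= /eqP ->; rewrite mulg1 addn0.
case/inQ_elim => [yj|[t tT yt]]; first by rewrite addnS; apply/inQ_S/IH.
rewrite addnS -(mulgVK t y) mulgA. apply: inQ_step; [exact: IH|exact: tT].
Qed.

Lemma inQ_T t : t \in TQ -> inQ 1 t.
Proof. move=> tT; rewrite -[t]mul1g; apply: inQ_step; [exact: eqxx|exact: tT]. Qed.

Lemma inQ_inv k x : inQ k x -> inQ k (x^-1)%g.
Proof.
elim: k x => [|k IH] x; first by move=> /= /eqP ->; rewrite invg1.
case/inQ_elim => [xk|[t tT xt]]; first by apply/inQ_S/IH.
have -> : (x^-1 = t^-1 * (x * t^-1)^-1)%g by rewrite invgM invgK mulgA mulVg mul1g.
rewrite -add1n; apply: inQ_mul; [exact/inQ_T/TQ2|exact: IH].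
Qed.

Definition lapl (u : Q -> int) w := \sum_t (- F t) * (u w - u (w * t)%g).

Lemma lap_fgrmul (u : {ffun Q -> int}) w : fgrmul u F w = lapl u w.
Proof.
rewrite /fgrmul ffunE (reindex_inj (mulgI w)) /=.
under eq_bigr => t _ do rewrite invgM mulgVK -F2.
rewrite /lapl.
under [RHS]eq_bigr => t _ do rewrite mulrBr !mulNr opprK addrC.
rewrite sumrB -mulr_suml F3 mul0r subr0; apply: eq_bigr => t _.
by rewrite mulrC.
Qed.

Lemma laplN (u : Q -> int) w : lapl (fun x => - u x) w = - lapl u w.
Proof.
by rewrite /lapl -sumrN; apply: eq_bigr => t _; rewrite -opprD mulrN.
Qed.

Lemma flux_cancel (u : Q -> int) (A : {set Q}) :
  \sum_(w in A) \sum_(t | (w * t)%g \in A) (- F t * (u w - u (w * t)%g)) = 0.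
Proof.
set X := LHS.
have : X = - X.
  pose sg (pr : Q * Q) := ((pr.1 * pr.2)%g, (pr.2^-1)%g).
  have sgK : involutive sg by case=> a b; rewrite /sg /= mulgK invgK.
  rewrite {1}/X pair_big_dep /= (reindex_inj (inv_inj sgK)) /= /X pair_big_dep -sumrN.
  apply: eq_big => [[a b]|[a b] _] /=; first by rewrite mulgK andbC.
  by rewrite mulgK -F2 -mulrN opprB.
move=> h; lia.
Qed.

Section UP.
Variables (u p : Q -> int).
Hypothesis Hlap : forall w, p w = lapl u w.

Lemma flux (A : {set Q}) : \sum_(w in A) p w =
  \sum_(w in A) \sum_t (if (w * t)%g \in A then 0 else - F t * (u w - u (w * t)%g)).
Proof.
transitivity (\sum_(w in A) (\sum_(t | (w * t)%g \in A) (- F t * (u w - u (w * t)%g))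
   + \sum_t (if (w * t)%g \in A then 0 else - F t * (u w - u (w * t)%g)))).
  apply: eq_bigr => w _; rewrite Hlap /lapl (bigID (fun t => (w * t)%g \in A)) /=.
  congr (_ + _); rewrite [LHS]big_mkcond /=; apply: eq_bigr => t _.
  by case: ((w * t)%g \in A).
by rewrite big_split /= flux_cancel add0r.
Qed.


Variable Mn : nat.
Hypothesis HM : \sum_q `|p q| <= Mn%:Z.

Lemma M0 : 0 <= Mn%:Z :> int.
Proof. by []. Qed.

Lemma lip x tau : F tau < 0 -> u (x * tau)%g < u x -> u x - u (x * tau)%g <= Mn%:Z.
Proof.
move=> Ft ux.
set A := [set y | u x <= u y].
have xA : x \in A by rewrite inE.
have tA : (x * tau)%g \notin A by rewrite inE -ltNge.
have h1 : \sum_(w in A) p w <= Mn%:Z.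
  apply: le_trans HM.
  apply: (@le_trans _ _ (\sum_(w in A) `|p w|)); first by apply: ler_sum => w _; exact: ler_norm.
  rewrite [X in _ <= X](bigID (fun w => w \in A)) /= lerDl; exact: sumr_ge0.
have nonneg : forall w, w \in A -> forall t,
    0 <= (if (w * t)%g \in A then 0 else - F t * (u w - u (w * t)%g)).
  move=> w wA t; case: ifPn => // wtA.
  have t1 : t != 1%g by apply: contraNneq wtA => ->; rewrite mulg1.
  apply: mulr_ge0; first by rewrite oppr_ge0 F1.
  move: wA wtA; rewrite !inE -ltNge subr_ge0 => a b; exact: le_trans (ltW b) a.
have h2 : u x - u (x * tau)%g <= \sum_(w in A) p w.
  rewrite (flux A) (bigD1 x) //= (bigD1 tau) //= (negPf tA).
  set R1 := \sum_(i | i != tau) _ ; set R2 := \sum_(i in A | i != x) _.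
  have R1p : 0 <= R1 by apply: sumr_ge0 => t _; exact: nonneg.
  have R2p : 0 <= R2.
    by apply: sumr_ge0 => w /andP[wA _]; apply: sumr_ge0 => t _; exact: nonneg.
  have hp : 0 <= (- F tau - 1) * (u x - u (x * tau)%g) by apply: mulr_ge0; lia.
  rewrite mulrBl mul1r in hp; exact: arith1 hp R1p R2p.
exact: le_trans h1.
Qed.

Lemma stepb x t : t \in TQ -> u (x * t)%g - u x <= Mn%:Z /\ u x - u (x * t)%g <= Mn%:Z.
Proof.
move=> tT; case: (TQ1 tT) => [->|Ft]; first by rewrite mulg1 subrr; split.
case: (ltrgtP (u (x * t)%g) (u x)) => h.
- by split; [lia|exact: lip].
- have Ft' : F (t^-1)%g < 0 by rewrite -F2.
  have := @lip (x * t)%g (t^-1)%g Ft'; rewrite mulgK => /(_ h) h'; split; lia.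
- by rewrite h subrr; split.
Qed.

Lemma pathb k z : inQ k z -> forall x,
  u (x * z)%g - u x <= k%:Z * Mn%:Z /\ u x - u (x * z)%g <= k%:Z * Mn%:Z.
Proof.
elim: k z => [|k IH] z.
  by move=> /eqP -> x; rewrite mulg1 subrr mul0r; split.
move=> hz x; rewrite -addn1 PoszD mulrDl mul1r.
case/inQ_elim: hz => [zk|[t tT zt]].
  by have [a b] := IH _ zk x; split; apply: arith_w.
have [a b] := IH _ zt x; have [c d] := stepb (x * (z * t^-1))%g tT.
move: c d; rewrite -mulgA mulgVK => c d; split.
  exact: arith_t a c.
exact: arith_t2 d b.
Qed.

Hypothesis gen : forall x, exists k, inQ k x.

Lemma maxpr xM : (forall y, u y <= u xM) ->
  (exists s, p s != 0 /\ u s = u xM) \/ (forall y, u y = u xM).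
Proof.
move=> hM.
case: (boolP [exists s, (p s != 0) && (u s == u xM)]) =>
   [/existsP[s /andP[ps /eqP us]]|nex]; first by left; exists s.
right.
have harm : forall y, u y = u xM -> forall t, t \in TQ -> u (y * t)%g = u xM.
  move=> y uy t tT.
  have py : p y = 0.
    by apply/eqP; apply: contraNT nex => py; apply/existsP; exists y; rewrite py uy eqxx.
  have nn : forall i, true -> 0 <= - F i * (u y - u (y * i)%g).
    move=> i _; case: (i =P 1%g) => [->|/eqP i1]; first by rewrite mulg1 subrr mulr0.
    by apply: mulr_ge0; [rewrite oppr_ge0 F1|rewrite subr_ge0 uy; exact: hM].
  have := psumr_eq0P nn; rewrite -/(lapl u y) -Hlap py => /(_ erefl t isT).
  case: (TQ1 tT) => [->|Ft]; first by rewrite mulg1.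
  move/eqP; rewrite mulf_eq0 => /orP[|]; lia.
have all_k : forall k z, inQ k z -> u (xM * z)%g = u xM.
  elim=> [|k IH] z; first by move=> /eqP ->; rewrite mulg1.
  case/inQ_elim => [/IH //|[t tT zt]].
  rewrite -(mulgVK t z) mulgA; apply: harm tT; exact: IH.
move=> y; have [k hk] := gen (xM^-1 * y)%g.
by have := all_k _ _ hk; rewrite mulVKg.
Qed.

Variable D : nat.
Hypothesis HS : forall q, p q != 0 -> inQ D q.

Lemma uphill x tau : p x = 0 -> F tau < 0 -> u (x * tau)%g < u x ->
  exists2 tau1, F tau1 < 0 & u x < u (x * tau1)%g.
Proof.
move=> px Ft lt.
case: (boolP [exists t1, (F t1 < 0) && (u x < u (x * t1)%g)]) =>
   [/existsP[t1 /andP[a b]]|nex]; first by exists t1.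
have nn : forall i, true -> 0 <= - F i * (u x - u (x * i)%g).
  move=> i _; case: (i =P 1%g) => [->|/eqP i1]; first by rewrite mulg1 subrr mulr0.
  have := F1 i1; case: (F i =P 0) => [->|/eqP Fi0 Fi]; first by rewrite oppr0 mul0r.
  have Fi' : F i < 0 by rewrite lt_neqAle Fi0 Fi.
  case: (ltP (u x) (u (x * i)%g)) => h.
    by case/existsP: nex; exists i; rewrite Fi' h.
  by apply: mulr_ge0; [rewrite oppr_ge0 | rewrite subr_ge0].
have := psumr_eq0P nn; rewrite -/(lapl u x) -Hlap px => /(_ erefl tau isT).
move/eqP; rewrite mulf_eq0 => /orP[/eqP|/eqP]; first by move=> h; move: Ft; rewrite -[F tau]opprK h oppr0 ltxx.
by move/eqP; rewrite subr_eq0 => /eqP h; move: lt; rewrite h ltxx.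
Qed.

Lemma walk (m : nat) : forall x, (forall y, u y <= u x + m%:Z) ->
  (exists2 tau, F tau < 0 & u (x * tau)%g < u x) -> inQ (D + m) x.
Proof.
elim: m => [|m IH] x hb [tau Ft lt];
  (case: (p x =P 0) => [px|/eqP px]; last by apply: inQ_le (HS px); apply: leq_addr);
  have [tau1 Ft1 gt] := uphill px Ft lt.
  by have := hb (x * tau1)%g; rewrite addr0 => h; move: gt; rewrite ltNge h.
have Ft1' : F (tau1^-1)%g < 0 by rewrite -F2.
have hx : inQ (D + m) (x * tau1)%g.
  apply: IH; first by move=> y; apply: arith_s (hb y) gt.
  by exists (tau1^-1)%g; rewrite // mulgK.
have T1 : (tau1^-1)%g \in TQ by apply/TQ2/TQ3; rewrite lt_eqF.
by rewrite addnS -(mulgK tau1 x); apply: inQ_step.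
Qed.

End UP.

Lemma range (u p : Q -> int) (Hlap : forall w, p w = lapl u w) (Mn : nat)
  (HM : \sum_q `|p q| <= Mn%:Z) (gen : forall x, exists k, inQ k x) (D : nat)
  (HS : forall q, p q != 0 -> inQ D q) x y : u x - u y <= ((D + D) * Mn)%N%:Z.
Proof.
have [xM hM] := exmax 1%g u.
have [xm hm] := exmax 1%g (fun z => - u z).
have Hlap' : forall w, - p w = lapl (fun z => - u z) w by move=> w; rewrite laplN Hlap.
have HM' : \sum_q `|- p q| <= Mn%:Z by under eq_bigr => q _ do rewrite normrN.
case: (maxpr Hlap HM gen hM) => [[s1 [ps1 us1]]|allM]; last by rewrite !allM subrr.
case: (maxpr Hlap' HM' gen hm) => [[s2 [ps2 us2]]|allm]; last first.
  by have := allm x; have := allm y; move=> a b; apply: arith_e b a.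
have ps2' : p s2 != 0 by move: ps2; rewrite oppr_eq0.
have z2 : inQ (D + D) (s2^-1 * s1)%g by apply: inQ_mul; [apply: inQ_inv; exact: HS ps2' | exact: HS ps1].
have [a _] := pathb Hlap HM z2 s2; rewrite mulVKg in a.
rewrite PoszM; eapply arith_r; [exact: a|rewrite us1; exact: hM|rewrite us2; exact: hm].
Qed.

Lemma nonflat (u p : Q -> int) (Hlap : forall w, p w = lapl u w) (Mn : nat)
  (HM : \sum_q `|p q| <= Mn%:Z) (gen : forall x, exists k, inQ k x) (D : nat)
  (HS : forall q, p q != 0 -> inQ D q) x tau :
  F tau < 0 -> u (x * tau)%g != u x -> inQ (D + (D + D) * Mn) x.
Proof.
move=> Ft ne.
have Hlap' : forall w, - p w = lapl (fun z => - u z) w by move=> w; rewrite laplN Hlap.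
have HM' : \sum_q `|- p q| <= Mn%:Z by under eq_bigr => q _ do rewrite normrN.
have HS' : forall q, - p q != 0 -> inQ D q by move=> q; rewrite oppr_eq0; exact: HS.
case: (ltrgtP (u (x * tau)%g) (u x)) => h.
- apply: (walk Hlap HS); last by exists tau.
  by move=> y; have := range Hlap HM gen HS y x; apply: arith_b.
- apply: (walk Hlap' HS'); last by exists tau; rewrite // ltrN2.
  by move=> y; have := range Hlap HM gen HS x y; apply: arith_c.
- by move: ne; rewrite h eqxx.
Qed.

Lemma flat (u p : Q -> int) (Hlap : forall w, p w = lapl u w) (Mn : nat)
  (HM : \sum_q `|p q| <= Mn%:Z) (gen : forall x, exists k, inQ k x) (D : nat)
  (HS : forall q, p q != 0 -> inQ D q) x t :
  ~~ inQ (D + (D + D) * Mn) x -> t \in TQ -> u (x * t)%g = u x.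
Proof.
move=> nx tT; case: (TQ1 tT) => [->|Ft]; first by rewrite mulg1.
by apply/eqP; apply: contraNT nx => ne; eapply nonflat; [exact: Hlap|exact: HM|exact: gen|exact: HS|exact: Ft|exact: ne].
Qed.

Theorem core_thm (u p : Q -> int) (Hlap : forall w, p w = lapl u w) (Mn : nat)
  (HM : \sum_q `|p q| <= Mn%:Z) (gen : forall x, exists k, inQ k x) (D : nat)
  (HS : forall q, p q != 0 -> inQ D q) :
  exists c, forall y, u y != c -> inQ (2 * (D + (D + D) * Mn)) y.
Proof.
set r0 := (D + (D + D) * Mn)%N.
pose lenQ y := ex_minn (gen y).
have lenP : forall y, inQ (lenQ y) y /\ forall k, inQ k y -> (lenQ y <= k)%N.
  by move=> y; rewrite /lenQ; case: ex_minnP => m ? ?; split.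
have [w hw] := exmax 1%g (fun x => (lenQ x)%:Z).
set E := lenQ w.
have allE : forall x, inQ E x.
  by move=> x; apply: (inQ_le _ (proj1 (lenP x))); have := hw x; rewrite lez_nat.
have wmin : forall k, inQ k w -> (E <= k)%N by move=> k; apply: (proj2 (lenP w)).
have claim : forall k z, inQ k z ->
    (forall j, inQ j (w^-1 * z)%g -> (2 * r0 + 1 + k <= j + E)%N) ->
    u (w^-1 * z)%g = u (w^-1)%g.
  elim=> [|k IH] z; first by move=> /eqP ->; rewrite mulg1.
  move=> hz; case/inQ_elim: (hz) => [zk|[t tT zt]] hJ.
    by apply: IH zk _ => j hj; have := hJ j hj; lia.
  have notin : ~~ inQ r0 (w^-1 * z)%g.
    apply/negP => xr; have := hJ _ xr.
    have wk : inQ (k.+1 + r0) w.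
      have -> : w = (z * (w^-1 * z)^-1)%g by rewrite invgM invgK mulKVg.
      exact: inQ_mul hz (inQ_inv xr).
    have := wmin _ wk; lia.
  have fl := flat Hlap HM gen HS notin (TQ2 tT).
  rewrite -fl -mulgA; apply: IH zt _ => j hj.
  have : inQ j.+1 (w^-1 * z)%g by rewrite -(mulgVK t z) mulgA; exact: inQ_step hj tT.
  move/hJ; lia.
exists (u (w^-1)%g) => y uy; apply/negPn/negP => ny.
have Ly : (2 * r0 + 1 <= lenQ y)%N.
  rewrite addn1 ltnNge; apply/negP => le; case/negP: ny.
  exact: inQ_le le (proj1 (lenP y)).
case/negP: uy; apply/eqP; rewrite -(claim E (w * y)%g (allE _)) ?mulKg //.
by move=> j; move=> /(proj2 (lenP y)); lia.
Qed.

End Core.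

End AuxC.
Import AuxC.

Module AuxD.
Set Implicit Arguments. Unset Strict Implicit. Unset Printing Implicit Defensive.
Import Order.TTheory GRing.Theory Num.Theory.
Local Open Scope ring_scope.

Section Hom.
Variables (G : groupType) (Q : finGroupType) (phi : G -> Q).
Hypothesis Hhom : group_hom phi.

Lemma phi1 : phi 1%g = 1%g.
Proof. by apply: (mulgI (phi 1%g)); rewrite -Hhom !mulg1. Qed.

Lemma phiV x : phi (x^-1)%g = ((phi x)^-1)%g.
Proof. by apply/esym/mulg1_eq; rewrite -Hhom mulgV phi1. Qed.

Variable T : seq G.

Lemma ballG_inQ k x : x \in ballG T k -> inQ (map phi T) k (phi x).
Proof.
elim: k x => [|k IH] x; first by rewrite ballG0 => /eqP ->; rewrite phi1 /= eqxx.
case/ballG_elim => [xk|[x' [t [x'k tT] ->]]]; first exact/inQ_S/IH.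
by rewrite Hhom; apply: inQ_step; [exact: IH|exact: map_f].
Qed.

Lemma inQ_ballG k q : inQ (map phi T) k q -> exists2 x, x \in ballG T k & phi x = q.
Proof.
elim: k q => [|k IH] q; first by move=> /= /eqP ->; exists 1%g; rewrite ?phi1 ?ballG0.
case/inQ_elim => [/IH [x xk <-]|[tq /mapP[t tT ->] /IH [x xk xq]]].
  by exists x => //; apply: ballG_S.
exists (x * t)%g; first exact: ballG_step.
by rewrite Hhom xq mulgVK.
Qed.

End Hom.

Section Ffacts.
Variables (G : groupType) (Q : finGroupType) (phi : G -> Q).
Hypothesis Hhom : group_hom phi.
Variable f : grpring G.
Hypothesis Hf : well_balanced f.
Local Notation T := (Defs.support f).
Local Notation F := (pi_hom phi f).

Lemma Tsym t : t \in T -> (t^-1)%g \in T.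
Proof. by case: Hf => _ _ Hsym _; rewrite !mem_support -Hsym. Qed.

Lemma FF1 t : t != 1%g -> F t <= 0.
Proof.
case: Hf => _ Hneg _ _ t1; rewrite pi_coef; apply: sumr_le0 => y /eqP yt.
apply: Hneg; apply: contraNneq t1 => y1; by rewrite -yt y1 phi1.
Qed.

Lemma FF2 t : F t = F (t^-1)%g.
Proof.
case: Hf => _ _ Hsym _; rewrite !pi_coef.
have pT : perm_eq T (map (fun y => y^-1)%g T).
  apply: uniq_perm; [exact: uniq_support|by rewrite map_inj_uniq ?uniq_support //; exact: invg_inj|].
  move=> y; apply/idP/mapP => [yT|[z zT ->]]; last exact: Tsym.
  by exists (y^-1)%g; rewrite ?invgK // Tsym.
rewrite [RHS](perm_big _ pT) big_map; apply: eq_big => y.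
  by rewrite phiV // eqg_inv.
by rewrite -Hsym.
Qed.

Lemma FF3 : \sum_t F t = 0.
Proof.
case: Hf => Hsum _ _ _.
under eq_bigr => t _ do rewrite pi_coef big_mkcond /=.
rewrite exchange_big /=.
transitivity (\sum_(y <- T) coef f y).
  apply: eq_bigr => y _; rewrite -big_mkcond /=.
  by under eq_bigl => t do rewrite eq_sym; rewrite big_pred1_eq.
rewrite /Defs.support big_filter -[RHS]Hsum [in RHS](bigID (fun s => coef f s != 0)) /=.
by rewrite [X in _ = _ + X]big1 ?addr0 // => s /negPn /eqP.
Qed.

Lemma TT1 t : t \in map phi T -> t = 1%g \/ F t < 0.
Proof.
case: Hf => _ Hneg _ _ /mapP[y yT ->].
case: (phi y =P 1%g) => [->|/eqP py1]; [by left|right].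
have y1 : y != 1%g by apply: contraNneq py1 => ->; rewrite phi1.
rewrite pi_coef big_mkcond (bigD1_seq y) ?uniq_support //= eqxx.
have cy : coef f y < 0 by rewrite lt_neqAle -mem_support yT Hneg.
have : \sum_(i <- T | i != y) (if phi i == phi y then coef f i else 0) <= 0.
  apply: sumr_le0 => i _; case: eqP => // pi; apply: Hneg.
  by apply: contraNneq py1 => i1; rewrite -pi i1 phi1.
move=> h; apply: (le_lt_trans (y := coef f y + 0)); first by rewrite lerD2l. by rewrite addr0.
Qed.

Lemma TT2 t : t \in map phi T -> (t^-1)%g \in map phi T.
Proof. by case/mapP=> y yT ->; rewrite -phiV //; apply: map_f; apply: Tsym. Qed.

Lemma TT3 t : F t != 0 -> t \in map phi T.
Proof.
apply: contraR => nt; rewrite pi_coef big1_seq // => y /andP[/eqP yt yT].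
by case/negP: nt; rewrite -yt map_f.
Qed.

Lemma genG x : exists k, x \in ballG T k.
Proof.
case: Hf => _ _ Hsym Hgen; apply: (@ballG_gen _ T _ Hgen) => y; rewrite mem_support //.
by move=> h; rewrite Hsym.
Qed.

End Ffacts.

End AuxD.
Import AuxD.

Module AuxE.
Set Implicit Arguments. Unset Strict Implicit. Unset Printing Implicit Defensive.
Import Order.TTheory GRing.Theory Num.Theory.
Local Open Scope ring_scope.

Section Lift.
Variables (G : groupType) (Q : finGroupType) (phi : G -> Q).
Hypothesis Hhom : group_hom phi.

Lemma coef_grmul (h f : grpring G) w : coef (grmul h f) w =
  \sum_(a <- h) \sum_(b <- f) (if (a.1 * b.1)%g == w then a.2 * b.2 else 0).
Proof. by rewrite /coef /grmul big_mkcond big_allpairs_dep. Qed.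

Lemma eq_mulr (x b w : G) : ((x * b)%g == w) = (x == (w * b^-1)%g).
Proof. by apply/eqP/eqP => [<-|->]; rewrite ?mulgK ?mulgVK. Qed.

Lemma eq_inv_mul (a s q : Q) : (a == (s^-1 * q)%g) = (s == (q * a^-1)%g).
Proof.
apply/eqP/eqP => [->|->]; first by rewrite invgM invgK mulVKg.
by rewrite invgM invgK mulgVK.
Qed.

Lemma pick_seq (r : seq G) a (Gf : G -> int) : uniq r ->
  \sum_(x <- r | x == a) Gf x = if a \in r then Gf a else 0.
Proof.
case: ifP => ar ur; first exact: sum_pick.
by rewrite big1_seq // => x /andP[/eqP xa xr]; move: ar; rewrite -xa xr.
Qed.

Variable f : grpring G.
Hypothesis Hf : well_balanced f.
Local Notation T := (Defs.support f).

Lemma coef_lift (B : seq G) (v : G -> int) w :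
  coef (grmul [seq (x, v x) | x <- undup B] f) w =
  \sum_(y <- T) coef f y * (if (w * y^-1)%g \in B then v (w * y^-1)%g else 0).
Proof.
rewrite coef_grmul big_map /=.
under eq_bigr => x _ do under eq_bigr => b _ do rewrite eq_mulr.
rewrite exchange_big /=.
rewrite -(regroupT f (fun y => if (w * y^-1)%g \in B then v (w * y^-1)%g else 0)).
apply: eq_bigr => b _.
rewrite -big_mkcond /= -mulr_suml pick_seq ?undup_uniq // mem_undup mulrC.
by case: ifP; rewrite ?mulr0.
Qed.

Lemma p_expand (u : {ffun Q -> int}) (c : int) q :
  fgrmul u (pi_hom phi f) q =
  \sum_(y <- T) coef f y * (u (q * (phi y)^-1)%g - c).
Proof.
set F := pi_hom phi f.
rewrite /fgrmul ffunE.
have e0 : \sum_s c * F (s^-1 * q)%g = 0.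
  have inj : injective (fun s : Q => (s^-1 * q)%g) by move=> a b /mulIg /invg_inj.
  rewrite -mulr_sumr.
  have -> : \sum_s F (s^-1 * q)%g = \sum_t F t by rewrite [RHS](reindex_inj inj).
  by rewrite FF3 ?mulr0.
transitivity (\sum_s (u s - c) * F (s^-1 * q)%g).
  by rewrite [RHS](eq_bigr _ (fun s _ => mulrBl _ _ _)) sumrB e0 subr0.
under eq_bigr => s _ do rewrite pi_coef big_distrr /= big_mkcond /=.
rewrite exchange_big /=; apply: eq_bigr => y _.
rewrite -big_mkcond /=.
under eq_bigl => s do rewrite eq_inv_mul.
by rewrite big_pred1_eq mulrC.
Qed.

Lemma lift (g : grpring G) (u : {ffun Q -> int}) (c : int) (L D : nat) :
  (forall e, e \in g -> e.1 \in ballG T D) -> (D <= L.+1)%N ->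
  (forall x, x \in ballG T (L + L.+1 + 1 + D) -> phi x = 1%g -> x = 1%g) ->
  (forall q, ~~ inQ (map phi T) L q -> u q = c) ->
  pi_hom phi g = fgrmul u (pi_hom phi f) ->
  in_left_ideal g f.
Proof.
move=> HD DL Hinj Hc Hu.
have Ts := Tsym Hf.
exists [seq (x, u (phi x) - c) | x <- undup (ballG T L)] => w.
rewrite (coef_lift (ballG T L) (fun x => u (phi x) - c) w).
case: (boolP (w \in ballG T L.+1)) => wL.
- transitivity (pi_hom phi g (phi w)).
    rewrite /pi_hom ffunE /coef [LHS]big_seq_cond [RHS]big_seq_cond.
    apply: eq_bigl => e; case: (boolP (e \in g)) => eg //=.
    apply/eqP/eqP => [->|pe] //; apply/esym.
    have xb : (e.1^-1 * w)%g \in ballG T (L + L.+1 + 1 + D).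
      apply: ballG_le (ballG_mul (ballG_inv Ts (HD _ eg)) wL); lia.
    have : phi (e.1^-1 * w)%g = 1%g by rewrite Hhom phiV // pe mulVg.
    move/(Hinj _ xb)/eqP.
    by rewrite mulg_eq1 eqg_inv => /eqP.
  rewrite Hu (p_expand u c); apply: eq_big_seq => y yT.
  rewrite -phiV // -Hhom; case: ifP => // nb.
  case: (u (phi (w * y^-1)%g) =P c) => [->|/eqP ne]; first by rewrite subrr.
  have : inQ (map phi T) L (phi (w * y^-1)%g) by apply: contraNT ne => /Hc ->.
  case/(inQ_ballG Hhom) => z zL pz.
  have xb : (z^-1 * (w * y^-1))%g \in ballG T (L + L.+1 + 1 + D).
    apply: ballG_le (ballG_mul (ballG_inv Ts zL)
                      (ballG_mul wL (ballG_T (Ts _ yT)))); lia.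
  have : phi (z^-1 * (w * y^-1))%g = 1%g by rewrite Hhom phiV // pz mulVg.
  move/(Hinj _ xb)/eqP.
  by rewrite mulg_eq1 eqg_inv => /eqP zw; move: nb; rewrite -zw zL.
- rewrite /coef big1_seq; last first.
    move=> e /andP[/eqP e1 eg]; case/negP: wL; rewrite -e1.
    exact: ballG_le DL (HD _ eg).
  rewrite big1_seq // => y /andP[_ yT]; case: ifP => [yb|]; last by rewrite mulr0.
  case/negP: wL; rewrite -(mulgVK y w) -addn1; apply: ballG_mul yb _.
  exact: ballG_T.
Qed.

Lemma eq_mulVq (a b q : Q) : (b == (a^-1 * q)%g) = ((a * b)%g == q).
Proof. by apply/eqP/eqP => [->|<-]; rewrite ?mulVKg ?mulKg. Qed.

Lemma pi_grmul (h g : grpring G) q :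
  pi_hom phi (grmul h g) q = fgrmul (pi_hom phi h) (pi_hom phi g) q.
Proof.
have -> : fgrmul (pi_hom phi h) (pi_hom phi g) q =
    \sum_s \sum_(a <- h) \sum_(b <- g)
       (if (phi a.1 == s) && (phi b.1 == (s^-1 * q)%g) then a.2 * b.2 else 0).
  rewrite /fgrmul ffunE; apply: eq_bigr => s _; rewrite /pi_hom !ffunE big_distrl /=.
  rewrite big_mkcond; apply: eq_bigr => a _.
  case: (phi a.1 == s) => /=; last by rewrite big1.
  rewrite big_distrr big_mkcond /=; apply: eq_bigr => b _.
  by case: ifP; rewrite ?mulr0.
rewrite exchange_big /=.
rewrite /pi_hom ffunE big_mkcond /grmul big_allpairs_dep /=.
apply: eq_bigr => a _; rewrite exchange_big /=; apply: eq_bigr => b _.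
rewrite -big_mkcond /= Hhom.
case: (boolP ((phi a.1 * phi b.1)%g == q)) => hq.
  rewrite (big_pred1 (phi a.1)) // => s /=.
  apply/andP/eqP => [[/eqP <- //]|->]; split => //; by rewrite eq_mulVq.
rewrite big_pred0 // => s; apply/andP => [[/eqP ea]].
by rewrite -ea eq_mulVq (negPf hq).
Qed.

Lemma pi_coef_eq (g1 g2 : grpring G) : (forall w, coef g1 w = coef g2 w) ->
  pi_hom phi g1 = pi_hom phi g2.
Proof.
move=> hc; apply/ffunP => q; rewrite /pi_hom !ffunE.
set Y := undup (map fst g1 ++ map fst g2).
have uY : uniq Y by exact: undup_uniq.
have e : forall g0 : grpring G, {subset map fst g0 <= Y} ->
    \sum_(e <- g0 | phi e.1 == q) e.2 = \sum_(y <- Y) coef g0 y * (phi y == q)%:R.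
  move=> g0 sub; rewrite -regroup // big_mkcond; apply: eq_bigr => e _.
  by case: ifP; rewrite ?mulr1 ?mulr0.
rewrite !e; first by apply: eq_bigr => y _; rewrite hc.
  by move=> y yg; rewrite mem_undup mem_cat yg orbT.
by move=> y yg; rewrite mem_undup mem_cat yg.
Qed.

End Lift.

End AuxE.
Import AuxE.

Module AuxF.
Set Implicit Arguments. Unset Strict Implicit. Unset Printing Implicit Defensive.
Import Order.TTheory GRing.Theory Num.Theory.
Local Open Scope ring_scope.

Lemma pick_n (Gamma : groupType) (Q : nat -> finGroupType) (phi : forall n, Gamma -> Q n)
  (Hint : forall x : Gamma,
     (forall n, exists2 i, (n <= i)%N & kernel (phi i) x) -> x = 1%g)
  (l : seq Gamma) :
  exists N, forall i, (N <= i)%N -> forall x, x \in l -> phi i x = 1%g -> x = 1%g.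
Proof.
elim: l => [|a l [N HN]]; first by exists 0%N.
case: (a =P 1%g) => [a1|/eqP a1].
  exists N => i hi x; rewrite inE => /orP[/eqP -> //|xl]; exact: HN.
have : ~ (forall n, exists2 i, (n <= i)%N & kernel (phi i) a).
  by move/Hint => h; move: a1; rewrite h eqxx.
case/not_all_ex_not => n hn.
exists (maxn N n) => i hi x; rewrite inE => /orP[/eqP ->|xl] hx.
  exfalso; apply: hn; exists i; first exact: leq_trans (leq_maxr N n) hi.
  by rewrite /kernel hx eqxx.
by apply: HN xl hx; exact: leq_trans (leq_maxl N n) hi.
Qed.

Lemma exD (Gamma : groupType) (T : seq Gamma) (gen : forall x, exists k, x \in ballG T k)
  (l : seq (Gamma * int)) : exists D, forall e, e \in l -> e.1 \in ballG T D.
Proof.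
elim: l => [|e l [D HD]]; first by exists 0%N.
have [k hk] := gen e.1; exists (maxn k D) => e'; rewrite inE => /orP[/eqP ->|el].
  exact: ballG_le (leq_maxl k D) hk.
exact: ballG_le (leq_maxr k D) (HD _ el).
Qed.

Lemma sum_abs (Gamma : groupType) (g : grpring Gamma) :
  \sum_(e <- g) `|e.2| = (\sum_(e <- g) absz e.2)%N%:Z.
Proof. by elim: g => [|e g IH]; rewrite ?big_nil ?big_cons // PoszD IH abszE. Qed.

Lemma pi_abs (Gamma : groupType) (Q : finGroupType) (phi : Gamma -> Q) (g : grpring Gamma) :
  \sum_q `|pi_hom phi g q| <= (\sum_(e <- g) absz e.2)%N%:Z.
Proof.
rewrite -sum_abs.
apply: (@le_trans _ _ (\sum_q \sum_(e <- g | phi e.1 == q) `|e.2|)).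
  by apply: ler_sum => q _; rewrite /pi_hom ffunE; exact: ler_norm_sum.
under eq_bigr => q _ do rewrite big_mkcond /=.
rewrite exchange_big /=; apply: ler_sum => e _.
rewrite -big_mkcond /=.
by under eq_bigl => q do rewrite eq_sym; rewrite big_pred1_eq.
Qed.

Lemma main_aux (Gamma : groupType)
  (Q : nat -> finGroupType) (phi : forall n, Gamma -> Q n)
  (Hfg : finitely_generated Gamma)
  (Hrf : residually_finite Gamma)
  (Hinf : infinite_group Gamma)
  (Hhom : forall n, group_hom (phi n))
  (Hsurj : forall n (q : Q n), exists x : Gamma, phi n x = q)
  (Hint : forall x : Gamma,
     (forall n, exists2 i, (n <= i)%N & kernel (phi i) x) -> x = 1%g)
  (f g : grpring Gamma)
  (Hf : well_balanced f) :
  (forall n, exists u : {ffun Q n -> int},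
      pi_hom (phi n) g = fgrmul u (pi_hom (phi n) f))
  <-> in_left_ideal g f.
Proof.
have Ts := Tsym Hf.
split; last first.
  case=> h Hh n; exists (pi_hom (phi n) h).
  rewrite (pi_coef_eq (phi n) Hh); apply/ffunP => q; exact: pi_grmul (Hhom n) h f q.
move=> Hn.
have [D HD] := exD (genG Hf) g.
set M := (\sum_(e <- g) absz e.2)%N.
set L := (2 * (D + (D + D) * M))%N.
have [N HN] := pick_n Hint (ballG (Defs.support f) (L + L.+1 + 1 + D)).
have [u Hu] := Hn N.
have Hh := Hhom N.
have Hlap : forall w, pi_hom (phi N) g w = lapl (pi_hom (phi N) f) u w.
  by move=> w; rewrite Hu lap_fgrmul //; [exact: FF2|exact: FF3].
have HM := pi_abs (phi N) g.
have genQ : forall q, exists k, inQ (map (phi N) (Defs.support f)) k q.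
  move=> q; have [x <-] := Hsurj N q; have [k hk] := genG Hf x.
  by exists k; exact: (ballG_inQ Hh hk).
have HS : forall q, pi_hom (phi N) g q != 0 -> inQ (map (phi N) (Defs.support f)) D q.
  move=> q; rewrite /pi_hom ffunE.
  case: (boolP (has (fun e => phi N e.1 == q) g)) => [/hasP[e eg /eqP <-] _|nh].
    exact: (ballG_inQ Hh (HD _ eg)).
  rewrite big1_seq ?eqxx // => e /andP[eq eg]; case/negP: nh; apply/hasP; by exists e.
have [c hc] := core_thm (FF1 Hh Hf) (FF2 Hh Hf) (FF3 (phi N) Hf) (TT1 Hh Hf) (TT2 Hh Hf)
  (@TT3 _ _ _ f) Hlap HM genQ HS.
apply: (@AuxE.lift _ _ _ Hh f Hf g u c L D HD _ _ _ Hu).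
- rewrite /L; lia.
- by move=> x xb px; apply: HN xb px.
- by move=> q nq; apply/eqP; apply: contraNT nq => /hc.
Qed.

End AuxF.
Import AuxF.

Theorem lemma5p5 (Gamma : groupType)
  (Q : nat -> finGroupType) (phi : forall n, Gamma -> Q n)
  (Hfg : finitely_generated Gamma)
  (Hrf : residually_finite Gamma)
  (Hinf : infinite_group Gamma)
  (Hhom : forall n, group_hom (phi n))
  (Hsurj : forall n (q : Q n), exists x : Gamma, phi n x = q)
  (Hint : forall x : Gamma,
     (forall n, exists2 i, (n <= i)%N & kernel (phi i) x) -> x = 1%g)
  (f g : grpring Gamma)
  (Hf : well_balanced f) :
  (forall n, exists u : {ffun Q n -> int},
      pi_hom (phi n) g = fgrmul u (pi_hom (phi n) f))
  <-> in_left_ideal g f.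
Proof. exact: AuxF.main_aux. Qed.
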